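(* Let $n^*_1,n^*_2\ge1$, $n^*=n^*_1+n^*_2$, and let $\psi$ be a log-convex Archimedean generator with $\phi=\psi^{-1}$. Let $X_1,\dots,X_{n^*}$ be dependent nonnegative random variables sharing an Archimedean survival copula with generator $\psi$, with $X_i\sim F_1(\lambda_1x)$ for $i\le n^*_1$ and $X_j\sim F_2(\lambda_2x)$ for $j>n^*_1$; let $Y_1,\dots,Y_{n^*}$ be dependent nonnegative random variables sharing an Archimedean survival copula with generator $\psi$, with $Y_i\sim F_1(\mu_1x)$ for $i\le n^*_1$ and $Y_j\sim F_2(\mu_2x)$ for $j>n^*_1$ ($\lambda_k,\mu_k>0$). Let $X_{1:n^*}(n^*_1,n^*_2)=\min_iX_i$, $Y_{1:n^*}(n^*_1,n^*_2)=\min_iY_i$, and write $\boldsymbol\lambda^*=(\lambda_1,\dots,\lambda_1,\lambda_2,\dots,\lambda_2)$, $\boldsymbol\mu^*=(\mu_1,\dots,\mu_1,\mu_2,\dots,\mu_2)$ (with $n^*_1$ copies of the first entry and $n^*_2$ of the second). Let either (a) $n^*_1\le n^*_2$ and $\boldsymbol\lambda=(\lambda_1,\lambda_2),\boldsymbol\mu=(\mu_1,\mu_2)\in\mathcal E_+$, or (b) $n^*_1\ge n^*_2$ and $\boldsymbol\lambda,\boldsymbol\mu\in\mathcal D_+$. Then: (i) if $r_1$ or $r_2$ is increasing and $r_1(x)\le r_2(x)$ for all $x>0$ in case (a) (respectively $r_1(x)\ge r_2(x)$ for all $x>0$ in case (b)), then $\boldsymbol\lambda^*\succeq_w\boldsymbol\mu^*$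 implies $X_{1:n^*}(n^*_1,n^*_2)\le_{st}Y_{1:n^*}(n^*_1,n^*_2)$; (ii) if $r_1=r_2=r$ and $r$ is increasing, then $\boldsymbol\lambda^*\succeq_w\boldsymbol\mu^*$ implies $X_{1:n^*}(n^*_1,n^*_2)\le_{st}Y_{1:n^*}(n^*_1,n^*_2)$.
   Context: $Z\sim F(\lambda x)$ means $Z$ has distribution function $x\mapsto F(\lambda x)$. Archimedean generator: a continuous nonincreasing $\psi:[0,\infty)\to[0,1]$ with $\psi(0)=1$, $\psi(\infty)=0$, which is $m$-monotone; $\phi=\psi^{-1}$. $Z_1,\dots,Z_m$ with marginal survival functions $\bar G_i$ share an Archimedean survival copula with generator $\psi$ if $P(Z_1>z_1,\dots,Z_m>z_m)=\psi(\sum_i\phi(\bar G_i(z_i)))$. $F_1,F_2$ are absolutely continuous distribution functions on $[0,\infty)$ with densities $f_k$ and hazard rates $r_k=f_k/(1-F_k)$. $\mathcal E_+=\{(x_1,x_2):0<x_1\le x_2\}$, $\mathcal D_+=\{(x_1,x_2):x_1\ge x_2>0\}$. For $\boldsymbol a,\boldsymbol b\in\mathbb R^k$ with increasingly ordered coordinates $a_{(1)}\le\dots\le a_{(k)}$: $\boldsymbol a\succeq_w\boldsymbol b$ means $\sum_{i=l}^ka_{(i)}\ge\sum_{i=l}^kb_{(i)}$ for all $l$. $U\le_{st}V$ means $P(U>x)\le P(V>x)$ for all $x$. Increasing/decreasing are in the weak sense. *)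

(* Defs.v *)
From HB Require Import structures.
From mathcomp Require Import all_boot all_order all_algebra.
From mathcomp Require Import all_classical all_reals all_analysis.
Set Implicit Arguments. Unset Strict Implicit. Unset Printing Implicit Defensive.
Import Order.TTheory GRing.Theory Num.Theory.
Import numFieldNormedType.Exports.
Local Open Scope classical_set_scope.
Local Open Scope ring_scope.

Section Defs.
Variable R : realType.

Definition convex_on (I : set R) (g : R -> R) : Prop :=
  forall x y t, I x -> I y -> 0 <= t <= 1 ->
    g (t * x + (1 - t) * y) <= t * g x + (1 - t) * g y.

Definition nonincr_on (I : set R) (g : R -> R) : Prop :=
  forall x y, I x -> I y -> x <= y -> g y <= g x.

Definition m_monotone (m : nat) (psi : R -> R) : Prop :=
  [/\ (forall k, (k < m - 2)%N -> forall x, 0 < x -> derivable (derive1n k psi) x 1),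
      (forall k, (k <= m - 2)%N -> forall x, 0 < x -> 0 <= (-1) ^+ k * derive1n k psi x),
      (forall k, (k <= m - 2)%N ->
         nonincr_on `]0, +oo[ (fun x => (-1) ^+ k * derive1n k psi x)) &
      convex_on `]0, +oo[ (fun x => (-1) ^+ (m - 2) * derive1n (m - 2) psi x)].

Definition archimedean_generator (m : nat) (psi : R -> R) : Prop :=
  {within `[0, +oo[, continuous psi} /\
  [/\ nonincr_on `[0, +oo[ psi,
      (forall x, 0 <= x -> 0 <= psi x <= 1),
      psi 0 = 1,
      (psi x @[x --> +oo%R] --> (0:R)) &
      m_monotone m psi].

Definition log_convex (psi : R -> R) : Prop :=
  forall x y t, 0 <= x -> 0 <= y -> 0 <= t <= 1 ->
    psi (t * x + (1 - t) * y) <= (psi x) `^ t * (psi y) `^ (1 - t).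

(* phi = psi^{-1} on (0,1]  (phi(0) = +oo is handled in [arch_survival_copula]) *)
Definition inverse_generator (psi phi : R -> R) : Prop :=
  forall u, 0 < u <= 1 -> 0 <= phi u /\ psi (phi u) = u.

Definition ac_distribution (F f : R -> R) : Prop :=
  [/\ (forall x, x < 0 -> F x = 0),
      (forall x, 0 <= f x),
      measurable_fun setT f,
      (forall x, 0 <= x ->
         (F x)%:E = (\int[lebesgue_measure]_(t in `[0%R, x]) (f t)%:E)%E) &
      (F x @[x --> +oo%R] --> (1:R))].

Definition hazard (F f : R -> R) (x : R) : \bar R :=
  if F x < 1 then (f x / (1 - F x))%:E else +oo%E.

Definition hazard_increasing (F f : R -> R) : Prop :=
  forall x y, 0 < x -> x <= y -> (hazard F f x <= hazard F f y)%E.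

Definition Gbar (n1 : nat) (F1 F2 : R -> R) (l1 l2 : R) n (i : 'I_n) (z : R) : R :=
  if (i < n1)%N then 1 - F1 (l1 * z) else 1 - F2 (l2 * z).

(* Z_1..Z_n (on probability space P) share the Archimedean survival copula with
   generator psi (phi = psi^{-1}, phi(0) = +oo, psi(+oo) = 0), marginal
   survival functions Gb i *)
Definition arch_survival_copula d (T : measurableType d) (P : probability T R)
  n (Z : 'I_n -> T -> R) (psi phi : R -> R) (Gb : 'I_n -> R -> R) : Prop :=
  forall z : 'I_n -> R,
    P [set t | forall i, z i < Z i t] =
    if [forall i, 0 < Gb i (z i)]
    then (psi (\sum_(i < n) phi (Gb i (z i))))%:E else 0%E.

Definition model d (T : measurableType d) (P : probability T R) (n1 n2 : nat)
  (Z : 'I_(n1 + n2) -> {RV P >-> R}) (psi phi F1 F2 : R -> R) (l1 l2 : R) : Prop :=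
  [/\ (forall i, P [set t | Z i t < 0] = 0%E),
      (forall i x, P [set t | Z i t <= x] =
                   (1 - Gbar n1 F1 F2 l1 l2 i x)%:E) &
      arch_survival_copula P (fun i => (Z i : T -> R)) psi phi
                           (Gbar n1 F1 F2 l1 l2 (n:=n1 + n2))].

Definition minrv T n (Z : 'I_n -> T -> R) (t : T) : \bar R :=
  \big[Order.min/+oo%E]_(i < n) (Z i t)%:E.

Definition st_le d1 d2 (T1 : measurableType d1) (T2 : measurableType d2)
  (P1 : probability T1 R) (P2 : probability T2 R)
  (U : T1 -> \bar R) (V : T2 -> \bar R) : Prop :=
  forall x : R, (P1 [set t | x%:E < U t] <= P2 [set t | x%:E < V t])%E.

Definition weakly_supmajorizes (a b : seq R) : Prop :=
  size a = size b /\
  forall l, (l < size a)%N ->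
    \sum_(l <= i < size a) nth 0 (sort <=%R b) i <=
    \sum_(l <= i < size a) nth 0 (sort <=%R a) i.

Definition in_Eplus (x1 x2 : R) : Prop := (0 < x1) && (x1 <= x2).
Definition in_Dplus (x1 x2 : R) : Prop := (0 < x2) && (x2 <= x1).

End Defs.

Arguments model {R d T} P n1 n2 Z psi phi F1 F2 l1 l2.

(* Main.v *)
Require Import Defs.
From HB Require Import structures.
From mathcomp Require Import all_boot all_order all_algebra.
From mathcomp Require Import all_classical all_reals all_analysis.
From mathcomp Require Import measurable_realfun.
From mathcomp Require Import ring lra.
Import Order.TTheory GRing.Theory Num.Theory.
Import numFieldNormedType.Exports.
Local Open Scope classical_set_scope.
Local Open Scope ring_scope.

Section PartA.
Variable R : realType.
Variables (F f : R -> R).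
Hypothesis HF : ac_distribution F f.

Lemma F_lt0 y : y < 0 -> F y = 0.
Proof. by case: HF => + _ _ _ _; apply. Qed.

Lemma f_ge0 y : 0 <= f y.
Proof. by case: HF => _ + _ _ _; apply. Qed.

Lemma mf (D : set R) : measurable_fun D (fun t : R => (f t)%:E).
Proof. case: HF => _ _ mf _ _. by apply/measurable_EFinP; apply: measurable_funTS. Qed.

Lemma F_int x : 0 <= x -> (F x)%:E = (\int[lebesgue_measure]_(t in `[0%R, x]) (f t)%:E)%E.
Proof. by case: HF => _ _ _ + _; apply. Qed.

Lemma F0 : F 0 = 0.
Proof.
have := F_int _ (lexx 0). rewrite set_itv1 integral_set1.
by move=> [].
Qed.

Lemma F_diff z w : 0 <= z -> z <= w ->
  ((F w - F z)%:E = \int[lebesgue_measure]_(t in `]z, w]) (f t)%:E)%E.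
Proof.
move=> z0 zw.
have := F_int _ (le_trans z0 zw).
rewrite (@itv_bndbnd_setU _ _ (BLeft 0) (BRight z) (BRight w)); last 2 first.
- by rewrite bnd_simp.
- by rewrite bnd_simp.
rewrite ge0_integral_setU //=; last 3 first.
- exact: mf.
- by move=> t _; rewrite lee_fin f_ge0.
- rewrite /disj_set; apply/eqP; apply/seteqP; split => t //=.
  rewrite !in_itv /= => -[/andP[_ h1] /andP[h2 _]].
  by move: (lt_le_trans h2 h1); rewrite ltxx.
rewrite -F_int //.
case: (\int[lebesgue_measure]_(x in `]z, w]) (f x)%:E)%E => [r||] //=.
move=> [->]; congr (_%:E); ring.
Qed.

Lemma leb_itv (z w : R) : z <= w -> lebesgue_measure `]z, w]%classic = (w - z)%:E.
Proof.
move=> zw; rewrite lebesgue_measure_itv /= lte_fin.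
case: ltP => h; first by rewrite -EFinB.
have -> : w = z by apply/eqP; rewrite eq_le zw h.
by rewrite subrr.
Qed.

Lemma int_cst (z w C : R) : z <= w ->
  (\int[lebesgue_measure]_(t in `]z, w]) C%:E = (C * (w - z))%:E)%E.
Proof.
move=> zw; have := integral_cst lebesgue_measure (measurable_itv `]z, w]) C%:E.
rewrite /cst => ->; set m := (X in (_ * X)%E).
have -> : m = (w - z)%:E by exact: leb_itv.
by rewrite -EFinM.
Qed.

Lemma F_bound_le z w C : 0 <= z -> z <= w ->
  (forall u, z < u -> u <= w -> f u <= C) -> F w - F z <= C * (w - z).
Proof.
move=> z0 zw H; rewrite -lee_fin F_diff // -int_cst //.
apply: ge0_le_integral => //.
- by move=> t _; rewrite lee_fin f_ge0.
- exact: mf.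
- by move=> t; rewrite /= in_itv /= => /andP[h1 h2]; rewrite lee_fin H.
Qed.

Lemma F_bound_ge z w C : 0 <= z -> z <= w -> 0 <= C ->
  (forall u, z < u -> u <= w -> C <= f u) -> C * (w - z) <= F w - F z.
Proof.
move=> z0 zw C0 H; rewrite -lee_fin F_diff // -int_cst //.
apply: ge0_le_integral => //.
- exact: mf.
- by move=> t; rewrite /= in_itv /= => /andP[h1 h2]; rewrite lee_fin H.
Qed.

Lemma F_le0 y : y <= 0 -> F y = 0.
Proof.
rewrite le_eqVlt => /orP[/eqP ->|]; [exact: F0 | exact: F_lt0].
Qed.

Lemma F_mono z w : z <= w -> F z <= F w.
Proof.
move=> zw; case: (leP 0 z) => z0.
  by have := F_bound_ge _ _ _ z0 zw (lexx 0) (fun u _ _ => f_ge0 u); rewrite mul0r subr_ge0.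
rewrite F_lt0 //; case: (leP 0 w) => w0; last by rewrite F_lt0.
by have := F_bound_ge _ _ _ (lexx 0) w0 (lexx 0) (fun u _ _ => f_ge0 u); rewrite mul0r subr_ge0 F0.
Qed.

Lemma F_ge0 y : 0 <= F y.
Proof.
case: (leP y 0) => h; first by rewrite F_le0.
by rewrite -F0; apply: F_mono; apply: ltW.
Qed.

Lemma F_le1 y : F y <= 1.
Proof.
case: HF => _ _ _ _ Hlim.
rewrite -(cvg_lim _ Hlim) //.
apply: limr_ge; first by apply/cvg_ex; exists 1.
near=> x; apply: F_mono.
near: x; exists y; split; first exact: num_real.
by move=> t /= /ltW.
Unshelve. all: by end_near.
Qed.

Lemma haz_le rho u : (hazard F f u <= rho%:E)%E -> f u <= rho * (1 - F u).
Proof.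
rewrite /hazard; case: ltP => // h; rewrite lee_fin.
have h' : 0 < 1 - F u by rewrite subr_gt0.
by rewrite ler_pdivrMr.
Qed.

Lemma haz_ge rho u : 0 <= rho -> (rho%:E <= hazard F f u)%E -> rho * (1 - F u) <= f u.
Proof.
move=> r0; rewrite /hazard; case: ltP => h.
  have h' : 0 < 1 - F u by rewrite subr_gt0.
  by rewrite lee_fin ler_pdivlMr.
move=> _; apply: le_trans (f_ge0 u).
by rewrite mulr_ge0_le0 // subr_le0.
Qed.
End PartA.
Arguments F_bound_le {R F f} HF {z w C}.
Arguments F_bound_ge {R F f} HF {z w C}.
Arguments F_mono {R F f} HF {z w}.
Arguments F_le1 {R F f} HF y.
Arguments F_ge0 {R F f} HF y.
Arguments F_le0 {R F f} HF {y}.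
Arguments F0 {R F f} HF.
Arguments f_ge0 {R F f} HF y.
Arguments haz_le {R F f rho u}.
Arguments haz_ge {R F f} HF {rho u}.

Section RealAux.
Variable R : realType.

Lemma exists_nat (x : R) : exists M : nat, x < M%:R /\ (0 < M)%N.
Proof. by exists (Num.Def.trunc x).+1; split => //; exact: truncnS_gt. Qed.

Lemma lim_exp (x y : R) : 0 <= y -> (forall e, 0 < e -> x <= y * expR e) -> x <= y.
Proof.
move=> y0 H; case: (leP x y) => // yx; exfalso.
move: y0; rewrite le_eqVlt => /orP[/eqP y0|y0].
  by have := H 1 ltr01; rewrite -y0 mul0r => /(lt_le_trans yx); rewrite -y0 ltxx.
have xy1 : 1 < x / y by rewrite ltr_pdivlMr // mul1r.
have lp : 0 < ln (x / y) by exact: ln_gt0.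
have := H (ln (x / y) / 2) (divr_gt0 lp (ltr0n _ 2)).
have : expR (ln (x / y) / 2) < expR (ln (x / y)).
  rewrite ltr_expR; lra.
rewrite lnK; last by rewrite posrE; apply: lt_trans xy1.
move=> h1 h2.
have : y * expR (ln (x / y) / 2) < y * (x / y) by rewrite ltr_pM2l.
rewrite mulrCA divff ?mulr1 ?gt_eqF //.
by move=> /(le_lt_trans h2); rewrite ltxx.
Qed.

Lemma exp_1m (t : R) : 0 <= t -> t < 1 -> expR (- (t / (1 - t))) <= 1 - t.
Proof.
move=> t0 t1; have h : 0 < 1 - t by rewrite subr_gt0.
have E : 1 <= (1 - t) * expR (t / (1 - t)).
  apply: le_trans (ler_wpM2l (ltW h) (expR_ge1Dx _)).
  by rewrite mulrDr mulr1 mulrCA divff ?gt_eqF // mulr1 subrK.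
by rewrite expRN -div1r ler_pdivrMr ?expR_gt0.
Qed.

Lemma exp_1p (t : R) : 0 <= t -> expR (t / (1 + t)) <= 1 + t.
Proof.
move=> t0; have h : 0 < 1 + t by rewrite ltr_wpDr.
have E : 1 <= (1 + t) * expR (- (t / (1 + t))).
  apply: le_trans (ler_wpM2l (ltW h) (expR_ge1Dx _)).
  by rewrite mulrDr mulr1 mulrN mulrCA divff ?gt_eqF // mulr1 addrK.
rewrite expRN ler_pdivlMr ?expR_gt0 // mul1r in E.
exact: E.
Qed.
End RealAux.
Arguments exists_nat {R}.
Arguments lim_exp {R}.
Arguments exp_1m {R}.
Arguments exp_1p {R}.

Section PartB.
Variable R : realType.
Variables (F f : R -> R).
Hypothesis HF : ac_distribution F f.

Lemma stepL z w rho : 0 <= z -> z <= w -> 0 <= rho ->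
  (forall u, z < u -> u <= w -> f u <= rho * (1 - F u)) ->
  (1 - F z) * (1 - rho * (w - z)) <= 1 - F w.
Proof.
move=> z0 zw r0 H.
have := @F_bound_le _ _ _ HF _ _ (rho * (1 - F z)) z0 zw.
have Hb : forall u, z < u -> u <= w -> f u <= rho * (1 - F z).
  move=> u zu uw; apply: le_trans (H u zu uw) _.
  apply: ler_wpM2l => //; have := F_mono HF (ltW zu); lra.
move=> /(_ Hb) h; nra.
Qed.

Lemma stepU z w rho : 0 <= z -> z <= w -> 0 <= rho ->
  (forall u, z < u -> u <= w -> rho * (1 - F u) <= f u) ->
  (1 - F w) * (1 + rho * (w - z)) <= 1 - F z.
Proof.
move=> z0 zw r0 H.
have C0 : 0 <= rho * (1 - F w) by rewrite mulr_ge0 // subr_ge0 (F_le1 HF).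
have := F_bound_ge HF z0 zw C0.
have Hb : forall u, z < u -> u <= w -> rho * (1 - F w) <= f u.
  move=> u zu uw; apply: le_trans (H u zu uw).
  apply: ler_wpM2l => //; have := F_mono HF uw; lra.
move=> /(_ Hb) h; nra.
Qed.

Lemma MD (p q : R) (M : nat) : (0 < M)%N -> M%:R * ((q - p) / M%:R) = q - p.
Proof. by move=> M0; rewrite mulrCA divff ?mulr1 // pnatr_eq0 -lt0n. Qed.

Lemma iterL p q rho (M : nat) : 0 <= p -> p <= q -> 0 <= rho -> (0 < M)%N ->
  rho * ((q - p) / M%:R) <= 1 ->
  (forall u, p < u -> u <= q -> f u <= rho * (1 - F u)) ->
  forall k, (k <= M)%N ->
  (1 - F p) * (1 - rho * ((q - p) / M%:R)) ^+ k <= 1 - F (p + k%:R * ((q - p) / M%:R)).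
Proof.
move=> p0 pq r0 M0 rD H.
have HMD : M%:R * ((q - p) / M%:R) = q - p := @MD p q M M0.
set D := (q - p) / M%:R in rD HMD *.
have D0 : 0 <= D by rewrite divr_ge0 // subr_ge0.
elim=> [|k IH] kM; first by rewrite expr0 mulr1 mul0r addr0.
have IH' := IH (ltnW kM).
have kM' : k.+1%:R <= M%:R :> R by rewrite ler_nat.
have kM2 : k%:R <= M%:R :> R by rewrite ler_nat ltnW.
have hz : 0 <= p + k%:R * D by rewrite addr_ge0 // mulr_ge0.
have hzw : p + k%:R * D <= p + k.+1%:R * D by rewrite lerD2l ler_wpM2r // ler_nat.
have := stepL _ _ _ hz hzw r0.
have -> : p + k.+1%:R * D - (p + k%:R * D) = D by rewrite -natr1; ring.
have Hy : forall u, p + k%:R * D < u -> u <= p + k.+1%:R * D -> f u <= rho * (1 - F u).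
  move=> u h1 h2; apply: H.
  - by apply: le_lt_trans h1; rewrite lerDl mulr_ge0.
  - by have := ler_wpM2r D0 kM'; lra.
move=> /(_ Hy) h; apply: le_trans h.
rewrite exprS mulrCA [X in _ <= X]mulrC.
apply: ler_wpM2l; first by rewrite subr_ge0.
exact: IH'.
Qed.

Lemma iterU p q rho (M : nat) : 0 <= p -> p <= q -> 0 <= rho -> (0 < M)%N ->
  (forall u, p < u -> u <= q -> rho * (1 - F u) <= f u) ->
  forall k, (k <= M)%N ->
  (1 - F (p + k%:R * ((q - p) / M%:R))) * (1 + rho * ((q - p) / M%:R)) ^+ k <= 1 - F p.
Proof.
move=> p0 pq r0 M0 H.
have HMD : M%:R * ((q - p) / M%:R) = q - p := @MD p q M M0.
set D := (q - p) / M%:R in HMD *.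
have D0 : 0 <= D by rewrite divr_ge0 // subr_ge0.
elim=> [|k IH] kM; first by rewrite expr0 mulr1 mul0r addr0.
have IH' := IH (ltnW kM).
have hz : 0 <= p + k%:R * D by rewrite addr_ge0 // mulr_ge0.
have hzw : p + k%:R * D <= p + k.+1%:R * D by rewrite lerD2l ler_wpM2r // ler_nat.
have := stepU _ _ _ hz hzw r0.
have -> : p + k.+1%:R * D - (p + k%:R * D) = D by rewrite -natr1; ring.
have Hy : forall u, p + k%:R * D < u -> u <= p + k.+1%:R * D -> rho * (1 - F u) <= f u.
  move=> u h1 h2; apply: H.
  - by apply: le_lt_trans h1; rewrite lerDl mulr_ge0.
  - have kM' : k.+1%:R <= M%:R :> R by rewrite ler_nat.
    by have := ler_wpM2r D0 kM'; lra.
move=> /(_ Hy) h; apply: le_trans IH'.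
rewrite exprS mulrA; apply: ler_wpM2r => //.
by rewrite exprn_ge0 // addr_ge0 // mulr_ge0.
Qed.

Lemma L1 p q rho : 0 <= p -> p <= q -> 0 <= rho ->
  (forall u, p < u -> u <= q -> f u <= rho * (1 - F u)) ->
  (1 - F p) * expR (- (rho * (q - p))) <= 1 - F q.
Proof.
move=> p0 pq r0 H.
have A0 : 0 <= rho * (q - p) by rewrite mulr_ge0 // subr_ge0.
set A := rho * (q - p) in A0 *.
apply: lim_exp; first by rewrite subr_ge0 (F_le1 HF).
move=> e e0.
have [M [HM M0]] := exists_nat (A + A ^+ 2 / e).
have HMD : M%:R * ((q - p) / M%:R) = q - p := @MD p q M M0.
have Mpos : 0 < M%:R :> R by rewrite ltr0n.
have eM : e * A + A ^+ 2 < e * M%:R.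
  by have := HM; rewrite -(ltr_pM2l e0) mulrDr [e * (A ^+ 2 / e)]mulrC divfK ?gt_eqF.
have tM : rho * ((q - p) / M%:R) * M%:R = A by rewrite /A -mulrA divfK // pnatr_eq0 -lt0n.
set t := rho * ((q - p) / M%:R) in tM *.
have t0 : 0 <= t by rewrite mulr_ge0 // divr_ge0 // subr_ge0.
have MA : A < M%:R.
  have : 0 <= A ^+ 2 / e by rewrite divr_ge0 // ?sqr_ge0 ?ltW.
  by move: HM; lra.
have t1 : t < 1 by rewrite -(ltr_pM2r Mpos) mul1r tM.
have h := iterL _ _ _ _ p0 pq r0 M0 (ltW t1) H M (leqnn M).
rewrite HMD [p + _]addrC subrK in h.
have E1 : expR (- (t / (1 - t))) ^+ M <= (1 - t) ^+ M.
  apply: lerXn2r; [by rewrite nnegrE expR_ge0 | by rewrite nnegrE subr_ge0 ltW | exact: exp_1m t0 t1].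
rewrite -expRM_natl in E1.
have E2 : M%:R * (t / (1 - t)) <= A + e.
  have h1 : 0 < 1 - t by rewrite subr_gt0.
  rewrite mulrA ler_pdivrMr //; nra.
apply: le_trans (_ : _ <= (1 - F p) * expR (M%:R * - (t / (1 - t))) * expR e) _.
  rewrite -mulrA ler_wpM2l ?subr_ge0 ?(F_le1 HF) // -expRD ler_expR; lra.
rewrite ler_wpM2r ?expR_ge0 //; apply: le_trans h.
by rewrite ler_wpM2l ?subr_ge0 ?(F_le1 HF).
Qed.

Lemma L2 p q rho : 0 <= p -> p <= q -> 0 <= rho ->
  (forall u, p < u -> u <= q -> rho * (1 - F u) <= f u) ->
  1 - F q <= (1 - F p) * expR (- (rho * (q - p))).
Proof.
move=> p0 pq r0 H.
have A0 : 0 <= rho * (q - p) by rewrite mulr_ge0 // subr_ge0.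
set A := rho * (q - p) in A0 *.
apply: lim_exp; first by rewrite mulr_ge0 ?expR_ge0 // subr_ge0 (F_le1 HF).
move=> e e0.
have [M [HM M0]] := exists_nat (A ^+ 2 / e).
have HMD : M%:R * ((q - p) / M%:R) = q - p := @MD p q M M0.
have Mpos : 0 < M%:R :> R by rewrite ltr0n.
have eM : A ^+ 2 < e * M%:R.
  by have := HM; rewrite ltr_pdivrMr // mulrC.
have tM : rho * ((q - p) / M%:R) * M%:R = A by rewrite /A -mulrA divfK // pnatr_eq0 -lt0n.
set t := rho * ((q - p) / M%:R) in tM *.
have t0 : 0 <= t by rewrite mulr_ge0 // divr_ge0 // subr_ge0.
have h := iterU _ _ _ _ p0 pq r0 M0 H M (leqnn M).
rewrite HMD [p + _]addrC subrK in h.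
have E1 : expR (t / (1 + t)) ^+ M <= (1 + t) ^+ M.
  apply: lerXn2r; [by rewrite nnegrE expR_ge0 | by rewrite nnegrE addr_ge0 | exact: exp_1p t0].
rewrite -expRM_natl in E1.
set X := M%:R * (t / (1 + t)) in E1.
have E2 : A - e <= X.
  have h1 : 0 < 1 + t by rewrite ltr_wpDr.
  rewrite /X mulrA ler_pdivlMr //; nra.
have G0 : 0 <= 1 - F q by rewrite subr_ge0 (F_le1 HF).
apply: le_trans (_ : _ <= (1 - F q) * (1 + t) ^+ M * expR (- X)) _.
  rewrite -[leLHS]mulr1 -mulrA ler_wpM2l //.
  by rewrite -[leLHS](expRxMexpNx_1 X); apply: ler_wpM2r; rewrite ?expR_ge0.
apply: le_trans (_ : _ <= (1 - F p) * expR (- X)) _.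
  by rewrite ler_wpM2r ?expR_ge0.
rewrite -mulrA ler_wpM2l ?subr_ge0 ?(F_le1 HF) // -expRD ler_expR; lra.
Qed.
End PartB.
Arguments L1 {R F f} HF {p q rho}.
Arguments L2 {R F f} HF {p q rho}.

Section PartC.
Variable R : realType.
Variables (F1 f1 F2 f2 : R -> R).
Hypothesis HF1 : ac_distribution F1 f1.
Hypothesis HF2 : ac_distribution F2 f2.

Definition sep (z : R) := exists h : R -> R,
  [/\ forall u, 0 < u -> u <= z -> 0 <= h u,
      forall u v, 0 < u -> u <= v -> v <= z -> (hazard F1 f1 u <= (h v)%:E)%E &
      forall u v, 0 < u -> u <= v -> u <= z -> ((h u)%:E <= hazard F2 f2 v)%E].

Lemma hazE (F f : R -> R) u : F u < 1 -> hazard F f u = (f u / (1 - F u))%:E.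
Proof. by rewrite /hazard => ->. Qed.

Lemma haz_fin_ge0 (F f : R -> R) u : ac_distribution F f -> F u < 1 -> 0 <= f u / (1 - F u).
Proof. by move=> HF h; rewrite divr_ge0 ?(f_ge0 HF) // subr_ge0 ltW. Qed.

Lemma sep_of : (hazard_increasing F1 f1 \/ hazard_increasing F2 f2) ->
  (forall x, 0 < x -> (hazard F1 f1 x <= hazard F2 f2 x)%E) ->
  forall z, 0 < z -> F2 z < 1 -> sep z.
Proof.
move=> Hinc Hle z z0 Fz.
have F2lt : forall u, u <= z -> F2 u < 1.
  by move=> u uz; have := F_mono HF2 uz; lra.
have F1lt : forall u, 0 < u -> u <= z -> F1 u < 1.
  move=> u u0 uz; have := Hle u u0; rewrite (@hazE F2 f2 u (F2lt u uz)) /hazard.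
  by case: ltP.
case: Hinc => Hi.
- exists (fun u => f1 u / (1 - F1 u)); split.
  + by move=> u u0 uz; apply: haz_fin_ge0 HF1 (F1lt u u0 uz).
  + move=> u v u0 uv vz; rewrite -hazE; last exact: F1lt (lt_le_trans u0 uv) vz.
    exact: Hi.
  + move=> u v u0 uv uz; rewrite -hazE; last exact: F1lt u0 uz.
    by apply: le_trans (Hi _ _ u0 uv) (Hle _ (lt_le_trans u0 uv)).
- exists (fun u => f2 u / (1 - F2 u)); split.
  + by move=> u u0 uz; apply: haz_fin_ge0 HF2 (F2lt u uz).
  + move=> u v u0 uv vz; rewrite -hazE; last exact: F2lt v vz.
    by apply: le_trans (Hle _ u0) (Hi _ _ u0 uv).
  + move=> u v u0 uv uz; rewrite -hazE; last exact: F2lt u uz.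
    exact: Hi.
Qed.

Lemma L3 y : 0 < y -> sep y -> 1 - F2 y <= 1 - F1 y.
Proof.
move=> y0 [h [h0 h1 h2]].
apply: lim_exp; first by rewrite subr_ge0 (F_le1 HF1).
move=> e e0.
have [N [HN N0]] := exists_nat (y * h y / e).
have Npos : 0 < N%:R :> R by rewrite ltr0n.
set D := y / N%:R.
have D0 : 0 < D by rewrite divr_gt0.
have ND : N%:R * D = y by rewrite /D mulrCA divff ?mulr1 // gt_eqF.
pose rho (j : nat) := if j == 0%N then 0 else h (j%:R * D).
have inv : forall j, (j <= N)%N ->
    (1 - F2 (j%:R * D)) * expR (- (D * rho j)) <= 1 - F1 (j%:R * D).
  elim=> [|j IH] jN.
    by rewrite /rho eqxx mul0r (F0 HF1) (F0 HF2) mulr0 oppr0 expR0 mulr1.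
  have IH' := IH (ltnW jN).
  set z := j%:R * D in IH' *; set w := j.+1%:R * D.
  have z0 : 0 <= z by rewrite mulr_ge0 // ltW.
  have wz : w - z = D by rewrite /w /z -natr1; ring.
  have zw : z <= w by rewrite -subr_ge0 wz ltW.
  have w0 : 0 < w by rewrite mulr_gt0 // ltr0n.
  have jD : forall k, (k <= N)%N -> k%:R * D <= y.
    by move=> k kN; rewrite -ND; apply: ler_wpM2r; [exact: ltW | rewrite ler_nat].
  have wy : w <= y by apply: jD.
  have hw0 : 0 <= h w := h0 w w0 wy.
  have E1 := L1 HF1 z0 zw hw0 (fun u zu uw =>
     haz_le (h1 u w (le_lt_trans z0 zu) uw wy)).
  have zpos : j != 0%N -> 0 < z.
    by move=> jn; rewrite /z mulr_gt0 // ltr0n lt0n.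
  have zy : z <= y by apply: jD; apply: ltnW.
  have r0 : 0 <= rho j.
    by rewrite /rho; case: eqP => // /eqP jn; apply: h0 => //; apply: zpos.
  have E2 : 1 - F2 w <= (1 - F2 z) * expR (- (rho j * (w - z))).
    apply: (L2 HF2 z0 zw r0) => u zu uw.
    move: r0; rewrite /rho; case: eqP => [_ _|/eqP jn r0].
      by rewrite mul0r (f_ge0 HF2).
    apply: (haz_ge HF2 r0).
    by apply: h2 => //; [apply: zpos | apply: ltW].
  rewrite wz in E1 E2.
  have -> : rho j.+1 = h w by [].
  apply: le_trans E1.
  apply: le_trans (_ : (1 - F2 z) * expR (- (rho j * D)) * expR (- (D * h w)) <= _).
    by apply: ler_wpM2r; rewrite ?expR_ge0.
  rewrite [D * h w]mulrC; apply: ler_wpM2r; rewrite ?expR_ge0 //.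
  by rewrite [rho j * D]mulrC.
have := inv N (leqnn N); rewrite ND /rho.
have -> : (N == 0%N) = false by apply/negbTE; rewrite -lt0n.
rewrite ND => H.
have Dh : D * h y <= e.
  have : y * h y < e * N%:R by rewrite -ltr_pdivrMl // mulrC.
  rewrite /D mulrAC ler_pdivrMr //.
  by move=> /ltW; rewrite mulrC.
apply: le_trans (_ : (1 - F2 y) * expR (- (D * h y)) * expR (D * h y) <= _).
  by rewrite -mulrA -expRD addNr expR0 mulr1.
apply: le_trans (ler_wpM2r (expR_ge0 _) H) _.
by rewrite ler_wpM2l ?subr_ge0 ?(F_le1 HF1) // ler_expR.
Qed.
End PartC.

Section PartD.
Variable R : realType.
Variables (psi phi : R -> R).
Hypothesis Hni : nonincr_on `[0, +oo[%classic psi.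
Hypothesis Hlc : log_convex psi.
Hypothesis Hinv : inverse_generator psi phi.

Lemma in0oo {x : R} : 0 <= x -> `[0, +oo[%classic x.
Proof. by move=> x0; rewrite /= in_itv /= x0. Qed.

Lemma psi_anti {x y} : 0 <= x -> x <= y -> psi y <= psi x.
Proof.
move=> x0 xy; apply: Hni => //; apply: in0oo => //; exact: le_trans xy.
Qed.

Lemma phi_ge0 {u} : 0 < u -> u <= 1 -> 0 <= phi u.
Proof. by move=> u0 u1; case: (Hinv u) => //; rewrite u0 u1. Qed.

Lemma psi_phi {u} : 0 < u -> u <= 1 -> psi (phi u) = u.
Proof. by move=> u0 u1; case: (Hinv u) => //; rewrite u0 u1. Qed.

Lemma phi_anti {u v} : 0 < u -> u <= v -> v <= 1 -> phi v <= phi u.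
Proof.
move=> u0 uv v1; have u1 : u <= 1 by apply: le_trans v1.
have v0 : 0 < v by apply: lt_le_trans uv.
case: (leP (phi v) (phi u)) => // h; exfalso.
have := psi_anti (phi_ge0 u0 u1) (ltW h).
rewrite !psi_phi // => vu.
have e : u = v by apply/eqP; rewrite eq_le uv vu.
by move: h; rewrite e ltxx.
Qed.

Lemma convC {u v w} : 0 <= u -> u < v -> v < w -> 0 < psi w ->
  (w - u) * ln (psi v) <= (w - v) * ln (psi u) + (v - u) * ln (psi w).
Proof.
move=> u0 uv vw pw.
have v0 : 0 <= v by apply: le_trans (ltW uv).
have w0 : 0 <= w by apply: le_trans (ltW vw).
have pv : 0 < psi v by apply: lt_le_trans pw (psi_anti v0 (ltW vw)).
have pu : 0 < psi u by apply: lt_le_trans pv (psi_anti u0 (ltW uv)).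
have wu : 0 < w - u by rewrite subr_gt0; apply: lt_trans vw.
set th := (w - v) / (w - u).
have th0 : 0 <= th by apply: divr_ge0; lra.
have wu2 : w - v <= w - u by lra.
have th1 : th <= 1 by rewrite ler_pdivrMr // mul1r.
have := Hlc u w th u0 w0 (introT andP (conj th0 th1)).
have -> : th * u + (1 - th) * w = v by rewrite /th; field; rewrite gt_eqF.
move=> h.
have := h; rewrite -ler_ln ?posrE ?mulr_gt0 ?powR_gt0 //.
rewrite lnM ?posrE ?powR_gt0 // !ln_powR => h2.
have := ler_wpM2l (ltW wu) h2.
have -> : (w - u) * (th * ln (psi u) + (1 - th) * ln (psi w)) =
  (w - v) * ln (psi u) + (v - u) * ln (psi w).
  by rewrite /th; field; rewrite gt_eqF.
by [].
Qed.

Lemma frac_le (a b c d : R) : 0 < b -> 0 < d -> a * d <= c * b -> a / b <= c / d.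
Proof. by move=> b0 d0 h; rewrite ler_pdivrMr // mulrAC ler_pdivlMr. Qed.

Lemma frac_le' (a b c d : R) : 0 < b -> 0 < d -> a / b <= c / d -> a * d <= c * b.
Proof. by move=> b0 d0; rewrite ler_pdivrMr // mulrAC ler_pdivlMr. Qed.

Lemma slope {s1 t1 s2 t2} : 0 <= s1 -> s1 < t1 -> t1 <= s2 -> s2 < t2 -> 0 < psi t2 ->
  (ln (psi t1) - ln (psi s1)) * (t2 - s2) <= (ln (psi t2) - ln (psi s2)) * (t1 - s1).
Proof.
move=> s10 st1 ts2 st2 p2.
have t1t2 : t1 < t2 by apply: le_lt_trans st2.
have h1 := convC s10 st1 t1t2 p2.
have k1 : (ln (psi t1) - ln (psi s1)) / (t1 - s1) <= (ln (psi t2) - ln (psi t1)) / (t2 - t1).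
  apply: frac_le; rewrite ?subr_gt0 //; lra.
have k2 : (ln (psi t2) - ln (psi t1)) / (t2 - t1) <= (ln (psi t2) - ln (psi s2)) / (t2 - s2).
  move: ts2; rewrite le_eqVlt => /orP[/eqP <-|ts2] //.
  have t10 : 0 <= t1 by apply: le_trans (ltW st1).
  have h2 := convC t10 ts2 st2 p2.
  apply: frac_le; rewrite ?subr_gt0 //; lra.
apply: frac_le'; rewrite ?subr_gt0 //.
exact: le_trans k1 k2.
Qed.

Lemma alg (nA nB a1 a2 A B d1 d2 : R) : 0 < nA -> 0 <= nB -> 0 < d1 -> 0 <= d2 ->
  0 < a1 -> a1 <= A -> B <= a2 -> nA * A <= nB * B -> a2 * d1 <= a1 * d2 ->
  nA * d1 <= nB * d2.
Proof.
move=> nA0 nB0 d10 d20 a10 a1A Ba2 hAB h.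
have hB : 0 < B.
  case: (ltP 0 B) => // B0; exfalso.
  have : nB * B <= 0 by rewrite mulr_ge0_le0.
  have : 0 < nA * A by rewrite mulr_gt0 //; apply: lt_le_trans a1A.
  lra.
have a20 : 0 < a2 by apply: lt_le_trans Ba2.
have e1 : nA * (a2 * d1) <= nA * (a1 * d2) by rewrite ler_wpM2l // ltW.
have e2 : (nA * a1) * d2 <= (nA * A) * d2.
  by apply: ler_wpM2r => //; rewrite ler_wpM2l // ltW.
have e3 : (nA * A) * d2 <= (nB * B) * d2 by apply: ler_wpM2r.
have e4 : (nB * B) * d2 <= (nB * a2) * d2.
  by apply: ler_wpM2r => //; rewrite ler_wpM2l.
rewrite -(ler_pM2l a20).
have -> : a2 * (nA * d1) = nA * (a2 * d1) by ring.
have -> : a2 * (nB * d2) = (nB * a2) * d2 by ring.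
apply: le_trans e1 _; rewrite mulrA.
exact: le_trans e2 (le_trans e3 e4).
Qed.
End PartD.
Arguments psi_anti {R psi} Hni {x y}.
Arguments phi_ge0 {R psi phi} Hinv {u}.
Arguments psi_phi {R psi phi} Hinv {u}.
Arguments phi_anti {R psi phi} Hni Hinv {u v}.
Arguments slope {R psi} Hni Hlc {s1 t1 s2 t2}.
Arguments alg {R nA nB a1 a2 A B d1 d2}.

Section PartE.
Variable R : realType.
Variables (psi phi : R -> R).
Hypothesis Hni : nonincr_on `[0, +oo[%classic psi.
Hypothesis Hlc : log_convex psi.
Hypothesis Hinv : inverse_generator psi phi.
Hypothesis Hrange : forall x, 0 <= x -> 0 <= psi x <= 1.
Variables (FA fA FB fB : R -> R).
Hypothesis HFA : ac_distribution FA fA.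
Hypothesis HFB : ac_distribution FB fB.

Definition Sv (nA nB : nat) (a b x : R) : R :=
  if (0 < 1 - FA (a * x)) && (0 < 1 - FB (b * x))
  then psi (nA%:R * phi (1 - FA (a * x)) + nB%:R * phi (1 - FB (b * x))) else 0.

Lemma G_le1 {F f : R -> R} {y} : ac_distribution F f -> 1 - F y <= 1.
Proof. by move=> HF; rewrite lerBlDr lerDl (F_ge0 HF). Qed.

Lemma Sv_ge0 nA nB a b x : 0 <= Sv nA nB a b x.
Proof.
rewrite /Sv; case: ifP => // /andP[h1 h2].
have hs : 0 <= nA%:R * phi (1 - FA (a * x)) + nB%:R * phi (1 - FB (b * x)).
  rewrite addr_ge0 // mulr_ge0 // (phi_ge0 Hinv) //.
    exact: (G_le1 HFA).
  exact: (G_le1 HFB).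
by case/andP: (Hrange _ hs).
Qed.


Lemma core (nA nB : nat) lA lB mA mB x :
  (0 < nA)%N ->
  (hazard_increasing FA fA \/ hazard_increasing FB fB) ->
  (forall y, 0 < y -> (hazard FA fA y <= hazard FB fB y)%E) ->
  0 < lA -> 0 < mA -> mA <= mB -> mB <= lB ->
  nA%:R * mA + nB%:R * mB <= nA%:R * lA + nB%:R * lB -> 0 < x ->
  Sv nA nB lA lB x <= Sv nA nB mA mB x.
Proof.
move=> nA0 Hinc Hle lA0 mA0 mAB mBl Hsum x0.
have nApos : 0 < nA%:R :> R by rewrite ltr0n.
have nBpos : 0 <= nB%:R :> R by [].
rewrite {1}/Sv; case: ifP => [/andP[gA'0 gB'0]|_]; last exact: Sv_ge0.
rewrite /Sv.
set gA' := 1 - FA (lA * x) in gA'0 *.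
set gB' := 1 - FB (lB * x) in gB'0 *.
set gA := 1 - FA (mA * x).
set gB := 1 - FB (mB * x).
have gA'1 : gA' <= 1 := G_le1 HFA.
have gB'1 : gB' <= 1 := G_le1 HFB.
have gA1 : gA <= 1 := G_le1 HFA.
have gB1 : gB <= 1 := G_le1 HFB.
have gBB' : gB' <= gB.
  have : mB * x <= lB * x by rewrite ler_wpM2r // ltW.
  by move=> /(F_mono HFB); rewrite /gB /gB'; lra.
have gB0 : 0 < gB by apply: lt_le_trans gBB'.
have phiB'0 : 0 <= phi gB' := phi_ge0 Hinv gB'0 gB'1.
have phiA'0 : 0 <= phi gA' := phi_ge0 Hinv gA'0 gA'1.
have phiB0 : 0 <= phi gB := phi_ge0 Hinv gB0 gB1.
case: (leP mA lA) => hA.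
  have gAA' : gA' <= gA.
    have : mA * x <= lA * x by rewrite ler_wpM2r // ltW.
    by move=> /(F_mono HFA); rewrite /gA /gA'; lra.
  have gA0 : 0 < gA by apply: lt_le_trans gAA'.
  rewrite gA0 gB0 /=.
  have phiA0 : 0 <= phi gA := phi_ge0 Hinv gA0 gA1.
  apply: (psi_anti Hni).
    by rewrite addr_ge0 // mulr_ge0.
  apply: lerD; apply: ler_wpM2l => //.
    exact: (@phi_anti R psi phi Hni Hinv gA' gA gA'0 gAA' gA1).
  exact: (@phi_anti R psi phi Hni Hinv gB' gB gB'0 gBB' gB1).
have c'0 : 0 < lA * x by rewrite mulr_gt0.
have c0 : 0 < mA * x by rewrite mulr_gt0.
have cc' : lA * x < mA * x by rewrite ltr_pM2r.
have ca : mA * x <= mB * x by rewrite ler_wpM2r // ltW.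
have ab : mB * x <= lB * x by rewrite ler_wpM2r // ltW.
have a0 : 0 <= mB * x by apply: le_trans (ltW c0) ca.
have Fc : FB (mA * x) < 1.
  have := F_mono HFB ca; rewrite /gB in gB0; lra.
have sp := @sep_of _ FA fA FB fB HFA HFB Hinc Hle (mA * x) c0 Fc.
have L3c := @L3 _ FA fA FB fB HFA HFB (mA * x) c0 sp.
have gBA : gB <= gA.
  by have := F_mono HFB ca; rewrite /gA /gB; lra.
have gA0 : 0 < gA by apply: lt_le_trans gBA.
have gAA' : gA <= gA'.
  by have := F_mono HFA (ltW cc'); rewrite /gA /gA'; lra.
rewrite gA0 gB0 /=.
have phiA0 : 0 <= phi gA := phi_ge0 Hinv gA0 gA1.
case: sp => h [h0 h1 h2].
have rho0 : 0 <= h (mA * x) := h0 _ c0 (lexx _).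
have E1 := L1 HFA (ltW c'0) (ltW cc') rho0
  (fun u c'u uc => haz_le (h1 u _ (lt_trans c'0 c'u) uc (lexx _))).
have E2 := L2 HFB a0 ab rho0
  (fun u au ub => haz_ge HFB rho0 (h2 _ u c0 (le_trans ca (ltW au)) (lexx _))).
rewrite -/gA -/gA' in E1; rewrite -/gB -/gB' in E2.
set s1 := phi gA'; set t1 := phi gA; set s2 := phi gB; set t2 := phi gB'.
have st1 : s1 <= t1 := (@phi_anti R psi phi Hni Hinv gA gA' gA0 gAA' gA'1).
have ts2 : t1 <= s2 := (@phi_anti R psi phi Hni Hinv gB gA gB0 gBA gA1).
have st2 : s2 <= t2 := (@phi_anti R psi phi Hni Hinv gB' gB gB'0 gBB' gB1).
suff key : nA%:R * (t1 - s1) <= nB%:R * (t2 - s2).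
  apply: (psi_anti Hni).
    by rewrite addr_ge0 // mulr_ge0.
  move: key; rewrite !mulrBr; lra.
case: (eqVneq s1 t1) => [<-|ns1t1].
  by rewrite subrr mulr0 mulr_ge0 // subr_ge0.
have lst1 : s1 < t1 by rewrite lt_neqAle ns1t1.
have gAlt : gA < gA'.
  rewrite lt_neqAle gAA' andbT; apply/eqP => e; move: ns1t1.
  by rewrite /s1 /t1 e eqxx.
set A := h (mA * x) * (mA * x - lA * x) in E1.
set B := h (mA * x) * (lB * x - mB * x) in E2.
have a1pos : 0 < ln gA' - ln gA.
  rewrite subr_gt0; rewrite ltNge ler_ln ?posrE //.
  by rewrite -ltNge.
have a1A : ln gA' - ln gA <= A.
  have E1' : ln (gA' * expR (- A)) <= ln gA by rewrite ler_ln ?posrE ?mulr_gt0 ?expR_gt0.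
  rewrite lnM ?posrE ?expR_gt0 // in E1'.
  by rewrite (_ : ln (expR (- A)) = - A) in E1'; [lra | exact: expRK].
have Ba2 : B <= ln gB - ln gB'.
  have E2' : ln gB' <= ln (gB * expR (- B)) by rewrite ler_ln ?posrE ?mulr_gt0 ?expR_gt0.
  rewrite lnM ?posrE ?expR_gt0 // in E2'.
  by rewrite (_ : ln (expR (- B)) = - B) in E2'; [lra | exact: expRK].
have hAB : nA%:R * A <= nB%:R * B.
  have h3 : nA%:R * (mA - lA) <= nB%:R * (lB - mB) by lra.
  have h4 := ler_wpM2l (mulr_ge0 rho0 (ltW x0)) h3.
  have -> : nA%:R * A = h (mA * x) * x * (nA%:R * (mA - lA)) by rewrite /A; ring.
  have -> : nB%:R * B = h (mA * x) * x * (nB%:R * (lB - mB)) by rewrite /B; ring.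
  exact: h4.
case: (eqVneq s2 t2) => [es2t2|ns2t2].
  exfalso.
  have : gB = gB'.
    by rewrite -(psi_phi Hinv gB0 gB1) -(psi_phi Hinv gB'0 gB'1) -/s2 -/t2 es2t2.
  move=> e; rewrite e subrr in Ba2.
  have : nB%:R * B <= 0 by rewrite mulr_ge0_le0.
  have : 0 < nA%:R * A by rewrite mulr_gt0 //; apply: lt_le_trans a1A.
  lra.
have lst2 : s2 < t2 by rewrite lt_neqAle ns2t2.
have sl := slope Hni Hlc (phi_ge0 Hinv gA'0 gA'1) lst1 ts2 lst2
  (_ : 0 < psi t2).
rewrite /t2 (psi_phi Hinv gB'0 gB'1) in sl.
have {}sl := sl gB'0.
rewrite /t1 /s1 /s2 (psi_phi Hinv gA0 gA1) (psi_phi Hinv gA'0 gA'1)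
  (psi_phi Hinv gB0 gB1) in sl.
apply: (alg nApos nBpos) a1pos a1A Ba2 hAB _.
- by rewrite subr_gt0.
- by rewrite subr_ge0.
- rewrite -/t1 -/s1 -/s2 -/t2 in sl; move: sl.
  set d1 := t1 - s1; set d2 := t2 - s2.
  set la := ln gA; set la' := ln gA'; set lb := ln gB; set lb' := ln gB'.
  move=> sl.
  have -> : (lb - lb') * d1 = - ((lb' - lb) * d1) by ring.
  have -> : (la' - la) * d2 = - ((la - la') * d2) by ring.
  by rewrite lerN2.
Qed.
End PartE.
Arguments Sv {R}.

Lemma Sv_swap (R : realType) (psi phi FA FB : R -> R) nA nB a b x :
  Sv psi phi FA FB nA nB a b x = Sv psi phi FB FA nB nA b a x.
Proof. by rewrite /Sv andbC; case: ifP => // _; rewrite [X in psi X]addrC. Qed.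

Section PartF.
Variable R : realType.

Lemma lt_minrv T n (Z : 'I_n -> T -> R) (x : R) t :
  (x%:E < minrv Z t)%E <-> (forall i, x < Z i t).
Proof.
rewrite /minrv; split.
  move=> h i; rewrite -lte_fin; apply: lt_le_trans h _; exact: bigmin_le.
move=> h; apply: lt_bigmin => //; first exact: ltey.
by move=> i _; rewrite lte_fin.
Qed.

Lemma surv_min d (T : measurableType d) (P : probability T R) n1 n2
  (Z : 'I_(n1 + n2) -> {RV P >-> R}) (psi phi F1 F2 : R -> R) (l1 l2 x : R) :
  model P n1 n2 Z psi phi F1 F2 l1 l2 -> (0 < n1)%N -> (0 < n2)%N ->
  P [set t | (x%:E < minrv (fun i => (Z i : T -> R)) t)%E] =
  (Sv psi phi F1 F2 n1 n2 l1 l2 x)%:E.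
Proof.
move=> [_ _ Hcop] n10 n20.
have -> : [set t | (x%:E < minrv (fun i => (Z i : T -> R)) t)%E] =
          [set t | forall i, (fun _ => x) i < (Z i : T -> R) t].
  apply/seteqP; split => t /= h.
    by move=> i; rewrite -lte_fin; apply: lt_le_trans h _; exact: bigmin_le.
  rewrite /minrv; apply: lt_bigmin => //; first exact: ltey.
  by move=> i _; rewrite lte_fin.
rewrite Hcop /Sv.
have -> : [forall i, 0 < Gbar n1 F1 F2 l1 l2 (n:=n1 + n2) i x] =
          (0 < 1 - F1 (l1 * x)) && (0 < 1 - F2 (l2 * x)).
  apply/forallP/andP.
    move=> h; split.
      have := h (Ordinal (ltn_addr n2 n10)); by rewrite /Gbar /= n10.
    have hn : (n1 < n1 + n2)%N by rewrite -addn1 leq_add2l.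
    by have := h (Ordinal hn); rewrite /Gbar /= ltnn.
  by move=> [h1 h2] i; rewrite /Gbar; case: ifP.
case: ifP => // _.
congr (psi _)%:E.
rewrite big_split_ord /=.
have -> : \sum_(i < n1) phi (Gbar n1 F1 F2 l1 l2 (lshift n2 i) x) =
          \sum_(i < n1) phi (1 - F1 (l1 * x)).
  by apply: eq_bigr => i _; rewrite /Gbar /= ltn_ord.
have -> : \sum_(i < n2) phi (Gbar n1 F1 F2 l1 l2 (rshift n1 i) x) =
          \sum_(i < n2) phi (1 - F2 (l2 * x)).
  by apply: eq_bigr => i _; rewrite /Gbar /= ltnNge leq_addr.
by rewrite !sumr_const !card_ord !mulr_natl.
Qed.

Lemma sum_nseq n (c : R) : \sum_(y <- nseq n c) y = n%:R * c.
Proof.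
elim: n => [|n IH]; first by rewrite big_nil mul0r.
by rewrite /= big_cons IH -natr1; ring.
Qed.

Lemma major_facts (a b : seq R) : weakly_supmajorizes a b -> (0 < size a)%N ->
  (\sum_(y <- b) y <= \sum_(y <- a) y) /\
  (forall be ga, (forall y, y \in a -> y <= be) -> ga \in b -> ga <= be).
Proof.
case=> hs H sa; split.
  have h0 := H 0%N sa.
  rewrite -(perm_big _ (permEl (perm_sort <=%R a))) -(perm_big _ (permEl (perm_sort <=%R b))).
  rewrite [in X in X <= _](big_nth 0) [in X in _ <= X](big_nth 0) !size_sort -hs.
  exact: h0.
move=> be ga hbe gab.
have sa1 : ((size a).-1 < size a)%N by rewrite prednK.
have := H (size a).-1 sa1.
set N := (size a).-1.
have eN : size a = N.+1 by rewrite prednK.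
move=> hle0; rewrite eN !big_nat1 in hle0; move: hle0.
have s1 : ((size a).-1 < size (sort <=%R a))%N by rewrite size_sort.
have hmax : nth 0 (sort <=%R a) (size a).-1 <= be.
  by apply: hbe; rewrite -(mem_sort <=%R) mem_nth.
move=> hle.
have : ga \in sort <=%R b by rewrite mem_sort.
move=> /(nthP 0) [j jb <-].
apply: le_trans hmax; apply: le_trans hle.
have ss : sorted <=%R (sort <=%R b) by apply: sort_sorted; exact: le_total.
apply: (le_sorted_leq_nth 0 ss).
- by rewrite inE.
- by rewrite inE size_sort -hs.
- by move: jb; rewrite size_sort -hs eN ltnS.
Qed.
End PartF.

Theorem corollary3p5 (R : realType) (n1 n2 : nat)
  (psi phi F1 F2 f1 f2 : R -> R) (l1 l2 m1 m2 : R)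
  (d1 : measure_display) (T1 : measurableType d1) (P1 : probability T1 R)
  (X : 'I_(n1 + n2) -> {RV P1 >-> R})
  (d2 : measure_display) (T2 : measurableType d2) (P2 : probability T2 R)
  (Y : 'I_(n1 + n2) -> {RV P2 >-> R}) :
  (1 <= n1)%N -> (1 <= n2)%N ->
  archimedean_generator (n1 + n2) psi -> log_convex psi ->
  inverse_generator psi phi ->
  ac_distribution F1 f1 -> ac_distribution F2 f2 ->
  0 < l1 -> 0 < l2 -> 0 < m1 -> 0 < m2 ->
  model P1 n1 n2 X psi phi F1 F2 l1 l2 ->
  model P2 n1 n2 Y psi phi F1 F2 m1 m2 ->
  let lam := nseq n1 l1 ++ nseq n2 l2 in
  let mu := nseq n1 m1 ++ nseq n2 m2 in
  let Xmin := minrv (fun i => (X i : T1 -> R)) in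
  let Ymin := minrv (fun i => (Y i : T2 -> R)) in
  let r1 := hazard F1 f1 in
  let r2 := hazard F2 f2 in
  (* part (ii), common to both cases *)
  let part_ii :=
    ((forall x, 0 < x -> r1 x = r2 x) -> hazard_increasing F1 f1 ->
     weakly_supmajorizes lam mu -> st_le P1 P2 Xmin Ymin) in
  (* case (a) *)
  ((n1 <= n2)%N -> in_Eplus l1 l2 -> in_Eplus m1 m2 ->
     ((hazard_increasing F1 f1 \/ hazard_increasing F2 f2) ->
      (forall x, 0 < x -> (r1 x <= r2 x)%E) ->
      weakly_supmajorizes lam mu -> st_le P1 P2 Xmin Ymin) /\ part_ii) /\
  (* case (b) *)
  ((n2 <= n1)%N -> in_Dplus l1 l2 -> in_Dplus m1 m2 ->
     ((hazard_increasing F1 f1 \/ hazard_increasing F2 f2) ->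
      (forall x, 0 < x -> (r2 x <= r1 x)%E) ->
      weakly_supmajorizes lam mu -> st_le P1 P2 Xmin Ymin) /\ part_ii).
Proof.
move=> n10 n20 Hgen Hlc Hinv HF1 HF2 l10 l20 m10 m20 HX HY lam mu Xmin Ymin r1 r2 part_ii.
case: Hgen => _ [Hni Hrange _ _ _].
have Hsz : (0 < size lam)%N by rewrite /lam size_cat !size_nseq addn_gt0 n10.
have HSX : forall x, P1 [set t | (x%:E < Xmin t)%E] = (Sv psi phi F1 F2 n1 n2 l1 l2 x)%:E.
  by move=> x; exact: (@surv_min R _ _ P1 n1 n2 X psi phi F1 F2 l1 l2 x HX n10 n20).
have HSY : forall x, P2 [set t | (x%:E < Ymin t)%E] = (Sv psi phi F1 F2 n1 n2 m1 m2 x)%:E.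
  by move=> x; exact: (@surv_min R _ _ P2 n1 n2 Y psi phi F1 F2 m1 m2 x HY n10 n20).
have Hneg : forall x, x <= 0 ->
    Sv psi phi F1 F2 n1 n2 l1 l2 x = Sv psi phi F1 F2 n1 n2 m1 m2 x.
  move=> x hx.
  have e : forall (F f : R -> R) l, ac_distribution F f -> 0 < l -> F (l * x) = 0.
    by move=> F f l HF l0; apply: (F_le0 HF); rewrite mulr_ge0_le0 // ltW.
  by rewrite /Sv (e _ _ l1 HF1) // (e _ _ m1 HF1) // (e _ _ l2 HF2) // (e _ _ m2 HF2).
have Hmaj : weakly_supmajorizes lam mu ->
   n1%:R * m1 + n2%:R * m2 <= n1%:R * l1 + n2%:R * l2 /\
   (forall be ga, (forall y, y \in lam -> y <= be) -> ga \in mu -> ga <= be).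
  move=> Hm; have [hs hm] := @major_facts R lam mu Hm Hsz; split => //.
  by move: hs; rewrite /lam /mu !big_cat /= !sum_nseq.
have memlam : forall y, y \in lam -> y = l1 \/ y = l2.
  move=> y; rewrite /lam mem_cat !mem_nseq => /orP[/andP[_ /eqP ->]|/andP[_ /eqP ->]];
  by [left | right].
have m1mu : m1 \in mu by rewrite /mu mem_cat mem_nseq n10 eqxx.
have m2mu : m2 \in mu by rewrite /mu mem_cat !mem_nseq n20 eqxx orbT.
have caseA : (n1 <= n2)%N -> in_Eplus l1 l2 -> in_Eplus m1 m2 ->
     (hazard_increasing F1 f1 \/ hazard_increasing F2 f2) ->
     (forall x, 0 < x -> (r1 x <= r2 x)%E) ->
     weakly_supmajorizes lam mu -> st_le P1 P2 Xmin Ymin.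
  move=> _ /andP[_ hl] /andP[_ hm] Hinc Hle Hm x.
  rewrite HSX HSY lee_fin.
  case: (leP x 0) => hx; first by rewrite Hneg.
  have [hsum hmax] := Hmaj Hm.
  have hm2 : m2 <= l2.
    by apply: hmax m2mu => y /memlam [->|->].
  exact: (@core R psi phi Hni Hlc Hinv Hrange F1 f1 F2 f2 HF1 HF2 n1 n2 l1 l2 m1 m2 x
            n10 Hinc Hle l10 m10 hm hm2 hsum hx).
have caseB : (n2 <= n1)%N -> in_Dplus l1 l2 -> in_Dplus m1 m2 ->
     (hazard_increasing F1 f1 \/ hazard_increasing F2 f2) ->
     (forall x, 0 < x -> (r2 x <= r1 x)%E) ->
     weakly_supmajorizes lam mu -> st_le P1 P2 Xmin Ymin.
  move=> _ /andP[_ hl] /andP[_ hm] Hinc Hle Hm x.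
  rewrite HSX HSY lee_fin.
  case: (leP x 0) => hx; first by rewrite Hneg.
  have [hsum hmax] := Hmaj Hm.
  have hm1 : m1 <= l1.
    by apply: hmax m1mu => y /memlam [->|->].
  rewrite (@Sv_swap R psi phi F1 F2 n1 n2 l1 l2) (@Sv_swap R psi phi F1 F2 n1 n2 m1 m2).
  have Hinc' : hazard_increasing F2 f2 \/ hazard_increasing F1 f1.
    by case: Hinc; [right | left].
  have hsum' : n2%:R * m2 + n1%:R * m1 <= n2%:R * l2 + n1%:R * l1 by lra.
  exact: (@core R psi phi Hni Hlc Hinv Hrange F2 f2 F1 f1 HF2 HF1 n2 n1 l2 l1 m2 m1 x
            n20 Hinc' Hle l20 m20 hm hm1 hsum' hx).
split.
  move=> hn hl hm; split; first exact: caseA hn hl hm.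
  move=> Heq Hi Hm; apply: caseA hn hl hm (or_introl Hi) _ Hm.
  by move=> y y0; rewrite Heq.
move=> hn hl hm; split; first exact: caseB hn hl hm.
move=> Heq Hi Hm; apply: caseB hn hl hm (or_introl Hi) _ Hm.
by move=> y y0; rewrite Heq.
Qed.
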